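(* Let $n\ge1$, $\mu\in(0,1)$ and $\eta>4\mu n^2$. Let $x_*=(1+\eta,1+\frac\eta2,\dots,1+\frac\eta n)$, $\hat f(x)=\|x-x_*\|_\infty$ and $f_\mu(x)=\min_{u\in\mathbb{R}^n}\hat f(u)+\frac1{2\mu}\|x-u\|^2$. Let $p\in\{0,\dots,n-1\}$. For any $x\in\mathbb{R}^n$ with $\max_{i=p+1,\dots,n}|x^{(i)}|\le\mu$, we have $\nabla f_\mu(x)\in E_{p+1}$ and $\|\nabla f_\mu(x)\|_\infty\le 1$.
   Context: $(e_1,\dots,e_n)$ is the canonical basis of $\mathbb{R}^n$, $E_p=\operatorname{Span}(e_1,\dots,e_p)$ for $p\ge1$ and $E_0=\{0\}$. $\|\cdot\|$ is the Euclidean norm; $x^{(i)}$ is the $i$-th coordinate. $f_\mu$ (the Moreau envelope of $\hat f$) is differentiable. *)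

(* Defs.v *)
From HB Require Import structures.
From mathcomp Require Import all_boot all_order all_algebra.
From mathcomp Require Import all_classical all_reals all_analysis.
Set Implicit Arguments. Unset Strict Implicit. Unset Printing Implicit Defensive.
Import Order.TTheory GRing.Theory Num.Theory.
Import numFieldNormedType.Exports.
Local Open Scope ring_scope.
Local Open Scope classical_set_scope.

Section Defs.
Variable R : realType.
Variable n : nat.

(* the point x_* = (1+eta, 1+eta/2, ..., 1+eta/n); coordinate i (0-based) is 1 + eta/(i+1) *)
Definition xstar (eta : R) : 'rV[R]_n := \row_(i < n) (1 + eta / (i.+1)%:R).

Definition infnorm (x : 'rV[R]_n) : R := \big[Num.max/0]_(i < n) `|x 0 i|.

Definition sqnorm2 (x : 'rV[R]_n) : R := \sum_(i < n) (x 0 i) ^+ 2.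

Definition fhat (eta : R) (x : 'rV[R]_n) : R := infnorm (x - xstar eta).

(* Moreau envelope f_mu(x) = min_u hat f(u) + 1/(2 mu) ||x - u||^2 (the min is attained,
   so it equals the infimum) *)
Definition fmu (eta mu : R) (x : 'rV[R]_n) : R :=
  inf [set fhat eta u + (2 * mu)^-1 * sqnorm2 (x - u) | u in [set: 'rV[R]_n]].

Definition grad (f : 'rV[R]_n -> R) (x : 'rV[R]_n) : 'rV[R]_n :=
  \row_(i < n) ('d f x) (delta_mx 0 i).

(* E_p = Span(e_1,...,e_p): all coordinates of 1-based index > p (0-based index >= p) vanish *)
Definition in_Espace (p : nat) (x : 'rV[R]_n) : Prop := forall i : 'I_n, (p <= i)%N -> x 0 i = 0.

End Defs.

(* Main.v *)
Require Import Defs.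
From HB Require Import structures.
From mathcomp Require Import all_boot all_order all_algebra.
From mathcomp Require Import all_classical all_reals all_analysis.
From mathcomp Require Import ring lra.
Import Order.TTheory GRing.Theory Num.Theory.
Import numFieldNormedType.Exports.
Local Open Scope ring_scope.

Section S.
Variable R : realType.
Variable n : nat.

Lemma coord_le_norm (h : 'rV[R]_n) i : `|h 0 i| <= `|h|.
Proof.
rewrite [X in _ <= X]/Num.norm /= mx_normE.
rewrite -[leLHS]nngE num_le. exact: (le_bigmax _ _ (0, i)).
Qed.

Lemma lemaxr (a b : R) : b <= Num.max a b.
Proof. by rewrite le_max lexx orbT. Qed.
Lemma lemaxl (a b : R) : a <= Num.max a b.
Proof. by rewrite le_max lexx. Qed.

Definition clip (t a : R) := Order.max (- t) (Order.min t a).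

Lemma clip_facts t a : 0 <= t ->
  [/\ `|clip t a| <= t, `|a - clip t a| = Num.max (`|a| - t) 0 &
      (a - clip t a) * clip t a = t * `|a - clip t a| ].
Proof.
move=> t0; rewrite /clip.
have [ta|ta] := lerP t a.
  have -> : Num.max (-t) t = t by apply/max_idPr; lra.
  rewrite (ger0_norm t0) (ger0_norm (_ : 0 <= a - t)) ?subr_ge0 //.
  rewrite (ger0_norm (_ : 0 <= a)); last lra.
  rewrite (_ : Num.max (a - t) 0 = a - t); last by apply/max_idPl; lra.
  by split => //; rewrite mulrC.
have [ha2|ha2] := lerP (-t) a.
  rewrite subrr normr0 mul0r mulr0 (_ : Num.max (`|a| - t) 0 = 0); last first.
    by apply/max_idPr; rewrite subr_le0 ler_norml ha2 ltW.
  by split => //; rewrite ler_norml ha2 ltW.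

rewrite normrN (ger0_norm t0) (ltr0_norm (_ : a < 0)); last lra.
rewrite (ltr0_norm (_ : a - - t < 0)); last lra.
rewrite (_ : Num.max (- a - t) 0 = - a - t); last by apply/max_idPl; lra.
split => //; lra.
Qed.

Definition dotv (g y : 'rV[R]_n) : R := \sum_(i < n) g 0 i * y 0 i.

Lemma env_lower eta mu (x g y w : 'rV[R]_n) : 0 < mu ->
  (forall w, fhat eta (x - mu *: g) + dotv g (w - (x - mu *: g)) <= fhat eta w) ->
  fhat eta (x - mu *: g) + (2*mu)^-1 * sqnorm2 (x - (x - mu *: g)) + dotv g (y - x)
  <= fhat eta w + (2 * mu)^-1 * sqnorm2 (y - w).
Proof.
move=> mu0 sg.
have key : (2*mu)^-1 * sqnorm2 (y - w) + dotv g (w - (x - mu *: g))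
   - (2*mu)^-1 * sqnorm2 (x - (x - mu *: g)) - dotv g (y - x)
   = \sum_(i < n) (2*mu)^-1 * (mu * g 0 i + w 0 i - y 0 i) ^+ 2.
  rewrite /sqnorm2 /dotv !mulr_sumr -big_split -!sumrB /=.
  apply: eq_bigr => i _; rewrite !mxE; field; lra.
have : 0 <= \sum_(i < n) (2*mu)^-1 * (mu * g 0 i + w 0 i - y 0 i) ^+ 2.
  apply: sumr_ge0 => i _; apply: mulr_ge0; [rewrite invr_ge0; lra | exact: sqr_ge0].
rewrite -key; have := sg w; lra.
Qed.

Lemma env_upper eta mu (x g y : 'rV[R]_n) : 0 < mu ->
  fhat eta (x - mu *: g) + (2 * mu)^-1 * sqnorm2 (y - (x - mu *: g)) =
  fhat eta (x - mu *: g) + (2*mu)^-1 * sqnorm2 (x - (x - mu *: g)) + dotv g (y - x)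
   + (2*mu)^-1 * sqnorm2 (y - x).
Proof.
move=> mu0.
rewrite -!addrA; congr (_ + _).
rewrite /sqnorm2 /dotv !mulr_sumr -!big_split /=.
apply: eq_bigr => i _; rewrite !mxE; field; lra.
Qed.

Definition Venv eta mu (x g : 'rV[R]_n) :=
  fhat eta (x - mu *: g) + (2*mu)^-1 * sqnorm2 (x - (x - mu *: g)).

Lemma env_bounds eta mu (x g y : 'rV[R]_n) : 0 < mu ->
  (forall w, fhat eta (x - mu *: g) + dotv g (w - (x - mu *: g)) <= fhat eta w) ->
  (Venv eta mu x g + dotv g (y - x) <= fmu eta mu y) /\
  (fmu eta mu y <= Venv eta mu x g + dotv g (y - x) + (2*mu)^-1 * sqnorm2 (y - x)).
Proof.
move=> mu0 sg.
have lb : lbound [set fhat eta u + (2 * mu)^-1 * sqnorm2 (y - u) | u in [set: 'rV[R]_n]]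
            (Venv eta mu x g + dotv g (y - x)).
  by move=> _ [w _ <-]; exact: env_lower.
split.
  apply: lb_le_inf => //.
  by exists (fhat eta (0 : 'rV[R]_n) + (2 * mu)^-1 * sqnorm2 (y - 0)), 0.
rewrite /Venv -env_upper //.
apply: ge_inf; first by exists (Venv eta mu x g + dotv g (y - x)).
by exists (x - mu *: g).
Qed.

Lemma dotv_linear g : linear (dotv g).
Proof.
move=> a u v; change (dotv g (a *: u + v) = a * dotv g u + dotv g v).
rewrite /dotv mulr_sumr -big_split /=.
by apply: eq_bigr => i _; rewrite !mxE; ring.
Qed.

Lemma dotv_cont g : continuous (dotv g).
Proof.
move=> y; apply: differentiable_continuous.
have -> : dotv g = \sum_(i < n) (g 0 i *: (fun N : 'rV[R]_n => N 0 i)).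
  by apply/funext => z; rewrite /dotv fct_sumE; apply: eq_bigr.
apply: differentiable_sum => i; apply: differentiableZ.
exact: differentiable_coord.
Qed.

Lemma sqnorm2_le (h : 'rV[R]_n) : sqnorm2 h <= n%:R * `|h| ^+ 2.
Proof.
rewrite /sqnorm2 (_ : n%:R * `|h| ^+ 2 = \sum_(i < n) `|h| ^+ 2); last first.
  by rewrite sumr_const card_ord mulr_natl.
apply: ler_sum => i _; rewrite -real_normK ?num_real //.
by apply: lerXn2r; rewrite ?nnegrE ?normr_ge0 // coord_le_norm.
Qed.

Lemma diff_of (V W : normedModType R) (f : V -> W) (L : {linear V -> W}) x :
  continuous L -> f \o shift x = cst (f x) + L +o_ 0 id ->
  differentiable f x /\ 'd f x = L :> (V -> W).
Proof.
move=> Lc ho; have dE := diff_unique Lc ho; split => //.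
by apply/diff_locallyP; rewrite dE.
Qed.

Lemma env_diff eta mu (x g : 'rV[R]_n) : 0 < mu ->
  (forall w, fhat eta (x - mu *: g) + dotv g (w - (x - mu *: g)) <= fhat eta w) ->
  differentiable (fmu eta mu) x /\ 'd (fmu eta mu) x = dotv g :> (_ -> _).
Proof.
move=> mu0 sg.
pose L : {linear 'rV[R]_n -> R} := HB.pack (dotv g) (GRing.isLinear.Build _ _ _ _ _ (dotv_linear g)).
have Lc : continuous L by exact: dotv_cont.
have d0 : dotv g 0 = 0 by rewrite /dotv big1 // => i _; rewrite mxE mulr0.
have s0 : sqnorm2 (0 : 'rV[R]_n) = 0 by rewrite /sqnorm2 big1 // => i _; rewrite mxE expr0n.
have [fx1 fx2] := env_bounds eta mu x g x mu0 sg.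
rewrite subrr d0 s0 mulr0 !addr0 in fx1 fx2.
have fxE : fmu eta mu x = Venv eta mu x g by apply/le_anti; rewrite fx1 fx2.
suff : differentiable (fmu eta mu) x /\ 'd (fmu eta mu) x = L :> (_ -> _) by [].
  apply: diff_of => //.
  apply/eqaddoP => eps eps0.
  have del0 : 0 < 2 * mu * eps / n.+1%:R by rewrite divr_gt0 // !mulr_gt0.
  apply: filterS (nbhs0_le del0) => h hle /=.
  have [b1 b2] := env_bounds eta mu x g (h + x) mu0 sg.
  rewrite addrK -fxE in b1 b2.
  have hs := sqnorm2_le h.
  have : `|fmu eta mu (h + x) - (fmu eta mu x + dotv g h)| <= (2 * mu)^-1 * sqnorm2 h.
    rewrite ler_norml; apply/andP; split.
      have : 0 <= (2 * mu)^-1 * sqnorm2 h.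
        by rewrite mulr_ge0 // ?invr_ge0 ?sumr_ge0 // => [|i _]; [lra | exact: sqr_ge0].
      lra.
    lra.
  move=> /le_trans; apply.
  have a0 : 0 <= `|h| by [].
  have c0 : 0 < n.+1%:R :> R by rewrite ltr0n.
  have nc : n%:R <= n.+1%:R :> R by rewrite ler_nat.
  have ac : `|h| * n.+1%:R <= 2 * mu * eps by rewrite -ler_pdivlMr.
  have : sqnorm2 h <= 2 * mu * (eps * `|h|) by nra.
  move=> /(ler_wpM2l (_ : 0 <= (2 * mu)^-1)) => /(_ _)/le_trans; apply.
    by rewrite invr_ge0; lra.
  by rewrite mulKf // mulf_neq0 // ?gt_eqF.
Qed.

Lemma term_le_sum (F : 'I_n -> R) j : (forall i, 0 <= F i) -> F j <= \sum_i F i.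
Proof.
move=> F0; rewrite (bigD1 j) //= lerDl; exact: sumr_ge0.
Qed.

Lemma dotv_delta g i : dotv g (delta_mx 0 i) = g 0 i.
Proof.
rewrite /dotv (bigD1 i) //= big1 => [|k ki]; first by rewrite mxE !eqxx mulr1 addr0.
by rewrite mxE eqxx /= (negbTE ki) mulr0.
Qed.

Lemma exists_t (a : 'I_n -> R) mu : (forall i, 0 <= a i) -> mu < \sum_i a i -> 0 < mu ->
  exists t, 0 <= t /\ \sum_i Num.max (a i - t) 0 = mu.
Proof.
move=> a0 Smu mu0.
pose phi t := \sum_i Num.max (a i - t) 0.
have phic : continuous phi.
  have -> : phi = \sum_(i < n) (fun t => Num.max (a i - t) 0).
    by rewrite fct_sumE.
  move=> t0; elim/big_ind: _ => [|f1 f2 c1 c2|i _].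
  - exact: cst_continuous.
  - exact: continuousD.
  - apply: (@continuous_max _ _ (fun t => a i - t) (cst 0)).
      by apply: cvgB; [exact: cvg_cst | exact: cvg_id].
    exact: cst_continuous.
have S0 : 0 <= \sum_i a i by exact: sumr_ge0.
have [t t01 phit] : exists2 t, t \in `[0, \sum_i a i] & phi t = mu.
  apply: IVT => //; first exact: continuous_subspaceT.
  have -> : phi 0 = \sum_i a i.
    by apply: eq_bigr => i _; rewrite subr0; apply/max_idPl.
  have -> : phi (\sum_i a i) = 0.
    rewrite /phi big1 // => i _; apply/max_idPr.
    by rewrite subr_le0; apply: term_le_sum.
  by rewrite (min_r S0) (max_l S0) (ltW mu0) (ltW Smu).
exists t; split => //.
by move: t01; rewrite in_itv /= => /andP[].
Qed.

Lemma key_ineq (d c W F t : R) : d * W <= `|d| * F -> d * c = t * `|d| ->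
  d * (W - c) <= `|d| * (F - t).
Proof. move=> h1 h2; rewrite !mulrBr h2 [t * _]mulrC; lra. Qed.

Definition gvec (eta mu : R) (x : 'rV[R]_n) (t : R) : 'rV[R]_n :=
  \row_i (((x - xstar n eta) 0 i - clip t ((x - xstar n eta) 0 i)) / mu).

Lemma infnorm_ge (v : 'rV[R]_n) i : `|v 0 i| <= infnorm v.
Proof. exact: (le_bigmax _ (fun i => `|v 0 i|) i). Qed.

Lemma sg_clip (eta mu : R) (x : 'rV[R]_n) (t : R) : 0 < mu -> 0 <= t ->
  \sum_i Num.max (`|(x - xstar n eta) 0 i| - t) 0 = mu ->
  forall w, fhat eta (x - mu *: gvec eta mu x t)
            + dotv (gvec eta mu x t) (w - (x - mu *: gvec eta mu x t)) <= fhat eta w.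
Proof.
move=> mu0 t0 phit w.
set g := gvec eta mu x t.
set z := x - xstar n eta.
have ue (i : 'I_n) : (x - mu *: g) 0 i = xstar n eta 0 i + clip t (z 0 i).
  rewrite /g /z /gvec !mxE [mu * _]mulrC divfK ?gt_eqF //; ring.
have fu : fhat eta (x - mu *: g) <= t.
  rewrite /fhat /infnorm; apply: bigmax_le => // i _.
  have xe : (- xstar n eta) 0 i = - xstar n eta 0 i by rewrite mxE.
  rewrite mxE ue xe addrAC subrr add0r.
  by have [] := clip_facts t (z 0 i) t0.
set F := fhat eta w.
have hsum : dotv g (w - (x - mu *: g)) <= \sum_i (Num.max (`|z 0 i| - t) 0 / mu) * (F - t).
  apply: ler_sum => i _.
  have [c1 c2 c3] := clip_facts t (z 0 i) t0.
  have hW : `|w 0 i - xstar n eta 0 i| <= F.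
    have := infnorm_ge (w - xstar n eta) i.
    by have -> : (w - xstar n eta) 0 i = w 0 i - xstar n eta 0 i by rewrite !mxE.
  have wu : (w - (x - mu *: g)) 0 i = w 0 i - (x - mu *: g) 0 i by rewrite !mxE.
  have gi : g 0 i = (z 0 i - clip t (z 0 i)) / mu by rewrite /g mxE.
  rewrite wu ue gi -c2.
  set d := z 0 i - clip t (z 0 i).
  set c := clip t (z 0 i).
  set W := w 0 i - xstar n eta 0 i in hW *.
  have -> : w 0 i - (xstar n eta 0 i + c) = W - c by rewrite /W; ring.
  have dW : d * W <= `|d| * F.
    apply: le_trans (ler_norm _) _; rewrite normrM.
    by apply: ler_wpM2l; rewrite ?normr_ge0.
  have key : d * (W - c) <= `|d| * (F - t) by apply: key_ineq.
  rewrite mulrAC [X in _ <= X]mulrAC.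
  by apply: ler_wpM2r => //; rewrite invr_ge0 ltW.
have : \sum_i (Num.max (`|z 0 i| - t) 0 / mu) * (F - t) = F - t.
  by rewrite -mulr_suml -mulr_suml phit divff ?gt_eqF // mul1r.
lra.
Qed.
End S.
Arguments term_le_sum {R n}. Arguments exists_t {R n}. Arguments sg_clip {R n}.
Arguments env_diff {R n}. Arguments dotv_delta {R n}. Arguments gvec {R n}.
Arguments clip {R}. Arguments lemaxr {R}. Arguments lemaxl {R}. Arguments clip_facts {R}. Arguments dotv {R n}.

Theorem lemma3p5 (R : realType) (n : nat) (mu eta : R) (p : nat) (x : 'rV[R]_n) :
  (0 < n)%N -> 0 < mu -> mu < 1 -> 4 * mu * (n ^ 2)%:R < eta ->
  (p < n)%N ->
  (forall i : 'I_n, (p <= i)%N -> `|x 0 i| <= mu) ->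
  differentiable (fmu eta mu) x /\
  in_Espace (p.+1) (grad (fmu eta mu) x) /\
  infnorm (grad (fmu eta mu) x) <= 1.
Proof.
move=> n0 mu0 mu1 heta pn hx.
set z := x - xstar n eta.
have ze (i : 'I_n) : z 0 i = x 0 i - (1 + eta / i.+1%:R) by rewrite !mxE.
have N1 : 1 <= n%:R :> R by rewrite ler1n.
have muN : mu * 1 <= mu * n%:R by rewrite ler_pM2l.
have Nsq : (n ^ 2)%:R = n%:R * n%:R :> R by rewrite natrX expr2.
rewrite Nsq in heta.
have eta0 : 0 < eta by nra.
pose ip : 'I_n := Ordinal pn.
have [P PE] : exists P : R, P = p.+1%:R by eexists.
have P1 : 1 <= P by rewrite PE ler1n.
have PN : P <= n%:R by rewrite PE ler_nat.
have aP : (eta / P) * P = eta by rewrite divfK // gt_eqF // (lt_le_trans ltr01).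
have zp : 1 + eta / P - mu <= `|z 0 ip|.
  rewrite ze /=.
  have := hx ip (leqnn p); rewrite /= => hxp.
  have : 0 <= eta / P by rewrite divr_ge0 // ltW // (lt_le_trans ltr01).
  move=> e0; rewrite ler_normr; apply/orP; right.
  by move: hxp; rewrite ler_norml => /andP[h1 h2]; rewrite -PE opprB lerD2l lerN2.
have a4 : 4 * mu * n%:R < eta / P.
  rewrite ltr_pdivlMr ?(lt_le_trans ltr01) //; nra.
have Sgt : mu < \sum_i `|z 0 i|.
  apply: (lt_le_trans _ (term_le_sum (fun i => `|z 0 i|) ip (fun i => normr_ge0 _))).
  apply: lt_le_trans zp.
  have a4' : 4 * mu < eta / P.
    apply: le_lt_trans a4; rewrite -{1}(mulr1 (4 * mu)) ler_pM2l //.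
    by rewrite mulr_gt0.
  lra.
have [t [t0 phit]] := exists_t (fun i => `|z 0 i|) mu (fun i => normr_ge0 _) Sgt mu0.
have tlb : `|z 0 ip| - mu <= t.
  have := term_le_sum (fun i => Num.max (`|z 0 i| - t) 0) ip (fun i => lemaxr _ _).
  rewrite phit => h; have := lemaxl (`|z 0 ip| - t) 0; lra.
have zj (j : 'I_n) : (p.+1 <= j)%N -> `|z 0 j| <= t.
  move=> pj.
  have [J JE] : exists J : R, J = j.+1%:R by eexists.
  have PJ : P + 1 <= J by rewrite PE JE natr1 ler_nat ltnS.
  have JN : J <= n%:R by rewrite JE ler_nat.
  have J0 : 0 < J by lra.
  have aJ : (eta / J) * J = eta by rewrite divfK // gt_eqF.
  have b0 : 0 <= eta / J by rewrite divr_ge0 // ltW.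
  have hxj := hx j (ltnW pj).
  have zjle : `|z 0 j| <= mu + 1 + eta / J.
    rewrite ze; apply: le_trans (ler_normB _ _) _.
    have e1 : 0 <= 1 + eta / J by lra.
    rewrite -JE (ger0_norm e1); lra.
  have a4J : 4 * mu * J < eta / P.
    apply: le_lt_trans a4; apply: ler_wpM2l => //; nra.
  have diff : 3 * mu <= eta / P - eta / J.
    suff : (eta / P - eta / J) * J >= 4 * mu * J by nra.
    have : (eta / P - eta / J) * J = eta / P * (J - P) + eta - (eta / P) * P by rewrite aP; nra.
    nra.
  lra.
pose g := gvec eta mu x t.
have sg := sg_clip eta mu x t mu0 t0 phit.
have [dif dE] := env_diff eta mu x g mu0 sg.
have gradE : grad (fmu eta mu) x = g.
  by apply/rowP => i; rewrite /grad mxE dE dotv_delta.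
split => //; rewrite gradE; split.
  move=> i pi; rewrite /g /gvec mxE.
  have [_ c2 _] := clip_facts t (z 0 i) t0.
  have : `|z 0 i - clip t (z 0 i)| = 0.
    by rewrite c2; apply/max_idPr; rewrite subr_le0 zj.
  by move/eqP; rewrite normr_eq0 => /eqP ->; rewrite mul0r.
rewrite /infnorm; apply: bigmax_le => // i _.
rewrite /g /gvec mxE normrM (ger0_norm (_ : 0 <= mu^-1)); last by rewrite invr_ge0 ltW.
have [_ c2 _] := clip_facts t (z 0 i) t0.
rewrite -/z c2 ler_pdivrMr // mul1r -[X in _ <= X]phit.
exact: (term_le_sum (fun i => Num.max (`|z 0 i| - t) 0) i (fun i => lemaxr _ _)).
Qed.
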